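(* Let $Y\subseteq\mathbb P(V)$, the flag $Y_\bullet$, and two sequences of parameters $\mathbf u=(u_r,\dots,u_1)$, $\mathbf v=(v_r,\dots,v_1)$ associated to $Y_\bullet$ be as in the context. Then for every $f\in\mathbb K(Y)\setminus\{0\}$, $$\nu^{\mathbf u}_{Y_\bullet}(f)\cdot R^{\mathbf v}_{\mathbf u}=\nu^{\mathbf v}_{Y_\bullet}(f).$$
   Context: $\mathbb K$ is an algebraically closed field of characteristic $0$, $V$ a finite-dimensional $\mathbb K$-vector space, $Y\subseteq\mathbb P(V)$ a projective variety of dimension $r$, and $Y_\bullet:Y=Y_r\supseteq Y_{r-1}\supseteq\cdots\supseteq Y_1\supseteq Y_0=\{p\}$ a flag of projective subvarieties with $\dim Y_k=k$ such that each $Y_k$ ($k\ge1$) is smooth in codimension one, so that the local ring $\mathcal O_{Y_{k-1},Y_k}$ of $Y_k$ along $Y_{k-1}$ is a DVR. A sequence of parameters $\mathbf u=(u_r,\dots,u_1)$ consists of rational functions on $Y$ such that $u_k|_{Y_k}$ is a uniformizer of $\mathcal O_{Y_{k-1},Y_k}$. The valuation $\nu^{\mathbf u}_{Y_\bullet}:\mathbb K(Y)\setminus\{0\}\to\mathbb Z^r$ (values written as row vectors $(a_r,\dots,a_1)$, $\mathbb Z^r$ ordered lexicographically) is defined by: $f_r:=f$, $a_r$ = vanishing order of $f_r$ along $Y_{r-1}$; $f_{r-1}:=(u_r^{-a_r}f_r)|_{Y_{r-1}}$, $a_{r-1}$ = vanishing order of $f_{r-1}$ along $Y_{r-2}$;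 and inductively $f_{k-1}:=(u_k^{-a_k}f_k)|_{Y_{k-1}}$, $a_{k-1}$ = vanishing order of $f_{k-1}$ along $Y_{k-2}$. For $0\le k\le r-1$, $Y^k_\bullet:Y_k\supseteq\cdots\supseteq Y_0$ with parameters $(v_k,\dots,v_1)$ gives analogously a valuation $\nu^{\mathbf v}_{Y^k_\bullet}:\mathbb K(Y_k)\setminus\{0\}\to\mathbb Z^k$, embedded in $\mathbb Z^r$ via $(a_k,\dots,a_1)\mapsto(0,\dots,0,a_k,\dots,a_1)$. For $k=1,\dots,r$ let $\lambda_k\in\mathcal O_{Y_{k-1},Y_k}^\times$ be such that $u_k|_{Y_k}=\lambda_k\cdot v_k|_{Y_k}$ (viewing $\lambda_k\in\mathbb K(Y_k)$, its valuation being taken with respect to $Y^{k-1}_\bullet$ after restriction; in the paper written $\nu^{\mathbf v}_{Y^k_\bullet}(\lambda_k)$, whose first $r-k+1$ entries are zero). Let $M^{\mathbf v}_{\mathbf u}\in\mathrm{Mat}_r(\mathbb Z)$ be the matrix whose $k$-th row (rows indexed compatibly with the coordinates $r,\dots,1$) is $\nu^{\mathbf v}_{Y^k_\bullet}(\lambda_k)$, and $R^{\mathbf v}_{\mathbf u}:=\mathrm I_r+M^{\mathbf v}_{\mathbf u}$, an upper triangular unimodular matrix. *)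

(* Defs.v *)
From HB Require Import structures.
From mathcomp Require Import all_boot all_order all_algebra.
Set Implicit Arguments. Unset Strict Implicit. Unset Printing Implicit Defensive.
Import Order.TTheory GRing.Theory Num.Theory.
Local Open Scope ring_scope.

(* Algebraic encoding of the flag  Y = Y_r ⊇ ... ⊇ Y_0 = {p}:
   F k        = the function field K(Y_k),
   ord k      : K(Y_{k+1}) -> Z, the vanishing order along Y_k
                 (the normalized valuation of the DVR O_{Y_k, Y_{k+1}}),
   res k      : K(Y_{k+1}) -> K(Y_k), restriction to Y_k
                 (the residue map of O_{Y_k,Y_{k+1}}, meaningful on that DVR;
                  its value outside the valuation ring is irrelevant junk). *)
Unset Implicit Arguments.
Record DVRFlag (r : nat) := {
  F : nat -> fieldType;
  ord : forall k, F k.+1 -> int;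
  res : forall k, F k.+1 -> F k;
  ord_mul : forall k (x y : F k.+1), (k < r)%N -> x != 0 -> y != 0 ->
     ord k (x * y) = ord k x + ord k y;
  ord_add : forall k (x y : F k.+1), (k < r)%N -> x != 0 -> y != 0 -> x + y != 0 ->
     Order.min (ord k x) (ord k y) <= ord k (x + y);
  ord_onto : forall k, (k < r)%N -> exists x : F k.+1, (x != 0) && (ord k x == 1);
  (* res k is the residue map of the valuation ring O = {x | x = 0 or ord k x >= 0} *)
  res_one : forall k, (k < r)%N -> res k 1 = 1;
  res_add : forall k (x y : F k.+1), (k < r)%N ->
     (x == 0) || (0 <= ord k x) -> (y == 0) || (0 <= ord k y) ->
     res k (x + y) = res k x + res k y;
  res_mul : forall k (x y : F k.+1), (k < r)%N ->
     (x == 0) || (0 <= ord k x) -> (y == 0) || (0 <= ord k y) ->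
     res k (x * y) = res k x * res k y;
  res_ker : forall k (x : F k.+1), (k < r)%N -> (x == 0) || (0 <= ord k x) ->
     (res k x == 0) = (x == 0) || (0 < ord k x);
  res_onto : forall k (z : F k), (k < r)%N ->
     exists2 x : F k.+1, (x == 0) || (0 <= ord k x) & res k x = z
}.
Set Implicit Arguments.
Arguments F {r} d.
Arguments ord {r d k}.
Arguments res {r d k}.

(* A sequence of parameters: u k is (the restriction to Y_{k+1} of) the
   paper's u_{k+1}, a uniformizer of O_{Y_k, Y_{k+1}}. *)
Definition is_params r (D : DVRFlag r) (u : forall k, F D k.+1) : Prop :=
  forall k, (k < r)%N -> u k != 0 /\ ord (u k) = 1.

(* nu D u k f = the valuation of f ∈ K(Y_k) w.r.t. Y^k_• and parameters u,
   as the list (a_k, ..., a_1). *)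
Fixpoint nu r (D : DVRFlag r) (u : forall k, F D k.+1) (k : nat) : F D k -> seq int :=
  match k return F D k -> seq int with
  | 0 => fun _ => [::]
  | k'.+1 => fun f =>
      let a := ord f in a :: @nu r D u k' (res (f * (u k') ^ (- a)))
  end.

(* Embedding Z^k -> Z^r, (a_k,...,a_1) |-> (0,...,0,a_k,...,a_1), as a row
   vector indexed by columns 0..r-1 corresponding to coordinates r,...,1. *)
Definition embed_row (r k : nat) (s : seq int) : 'rV[int]_r :=
  \row_(j < r) (if (j < r - k)%N then 0 else nth 0 s (j - (r - k))).

Definition nuY r (D : DVRFlag r) (u : forall k, F D k.+1) (f : F D r) : 'rV[int]_r :=
  embed_row r r (nu u f).

Definition lambda r (D : DVRFlag r) (u v : forall k, F D k.+1) (k : nat) : F D k.+1 :=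
  u k / v k.

(* nu^v_{Y^k_•}(lambda_k), embedded in Z^r (k = paper index, k >= 1). *)
Definition lambda_row r (D : DVRFlag r) (u v : forall k, F D k.+1) (k : nat)
  : 'rV[int]_r :=
  match k with
  | 0 => 0
  | k'.+1 => embed_row r k'.+1 (nu v (lambda u v k'))
  end.

(* M^v_u: row i (coordinate r - i) is nu^v_{Y^{r-i}_•}(lambda_{r-i}). *)
Definition Mmat r (D : DVRFlag r) (u v : forall k, F D k.+1) : 'M[int]_r :=
  \matrix_(i < r, j < r) (lambda_row u v (r - i) 0 j).

Definition Rmat r (D : DVRFlag r) (u v : forall k, F D k.+1) : 'M[int]_r :=
  1%:M + Mmat u v.

(* Main.v *)
Require Import Defs.
From mathcomp Require Import all_boot all_order all_algebra.
From mathcomp Require Import zify ring.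
Import Order.TTheory GRing.Theory Num.Theory.
Local Open Scope ring_scope.

Section S.
Variables (r : nat) (D : DVRFlag r).

Lemma omul {k} {x y : F D k.+1} : (k < r)%N -> x != 0 -> y != 0 -> ord (x * y) = ord x + ord y.
Proof. exact: ord_mul. Qed.
Lemma ord1 k : (k < r)%N -> ord (1 : F D k.+1) = 0.
Proof.
move=> kr; have := @ord_mul _ D k 1 1 kr (oner_neq0 _) (oner_neq0 _).
rewrite mulr1 => h; lia.
Qed.

Lemma ordV k (x : F D k.+1) : (k < r)%N -> x != 0 -> ord x^-1 = - ord x.
Proof.
move=> kr x0; have := omul kr x0 (invr_neq0 x0).
rewrite mulfV // ord1 // => h; lia.
Qed.

Lemma ordXn k (x : F D k.+1) (n : nat) : (k < r)%N -> x != 0 -> ord (x ^+ n) = n%:Z * ord x.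
Proof.
move=> kr x0; elim: n => [|n IH]; first by rewrite expr0 ord1 // mul0r.
rewrite exprS omul // ?expf_neq0 // IH intS mulrDl mul1r //.
Qed.

Lemma ordX k (x : F D k.+1) (n : int) : (k < r)%N -> x != 0 -> ord (x ^ n) = n * ord x.
Proof.
move=> kr x0; case: n => n.
  by rewrite -exprnP ordXn.
rewrite NegzE -invr_expz ordV ?expfz_neq0 // -exprnP ordXn // mulNr //.
Qed.

Lemma rmul {k} {x y : F D k.+1} : (k < r)%N -> ord x = 0 -> ord y = 0 ->
  res (x * y) = res x * res y.
Proof. by move=> kr ox oy; apply: res_mul => //; rewrite ?ox ?oy lexx orbT. Qed.

Lemma rneq0 {k} {x : F D k.+1} : (k < r)%N -> x != 0 -> ord x = 0 -> res x != 0.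
Proof.
move=> kr x0 ox; rewrite res_ker //; last by rewrite ox lexx orbT.
by rewrite (negbTE x0) ox ltxx.
Qed.

Lemma ordnorm {w : forall k, F D k.+1} {k} {x : F D k.+1} : is_params w -> (k < r)%N ->
  x != 0 -> ord (x * w k ^ (- ord x)) = 0.
Proof.
move=> hw kr x0; have [w0 w1] := hw k kr.
rewrite omul // ?expfz_neq0 // ordX // w1 mulr1 subrr //.
Qed.

Lemma nu_mul (w : forall k, F D k.+1) : is_params w -> forall k, (k <= r)%N ->
  forall g h : F D k, g != 0 -> h != 0 -> forall j,
  nth 0 (nu w (g * h)) j = nth 0 (nu w g) j + nth 0 (nu w h) j.
Proof.
move=> hw; elim=> [|k IH] kr g h g0 h0 j /=; first by rewrite !nth_nil addr0.
have {}kr : (k < r)%N by [].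
have [w0 w1] := hw k kr.
rewrite omul //; case: j => [|j] //=.
rewrite opprD expfzDr // mulrACA (rmul kr (ordnorm hw kr g0) (ordnorm hw kr h0)).
rewrite IH ?(ltnW kr) //.
all: try (apply: rneq0; rewrite ?ordnorm ?mulf_neq0 ?expfz_neq0 //).
Qed.

Lemma nu_one (w : forall k, F D k.+1) : is_params w -> forall k, (k <= r)%N ->
  forall j, nth 0 (nu w (1 : F D k)) j = 0.
Proof.
move=> hw; elim=> [|k IH] kr j /=; first by rewrite nth_nil.
have {}kr : (k < r)%N by [].
rewrite ord1 //; case: j => [|j] //=.
by rewrite oppr0 expr0z mulr1 res_one // IH // ltnW.
Qed.

Lemma nu_Xn (w : forall k, F D k.+1) : is_params w -> forall k, (k <= r)%N ->
  forall (g : F D k) (n : nat), g != 0 -> forall j,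
  nth 0 (nu w (g ^+ n)) j = n%:Z * nth 0 (nu w g) j.
Proof.
move=> hw k kr g n g0 j; elim: n => [|n IH]; first by rewrite expr0 nu_one // mul0r.
rewrite exprS nu_mul ?expf_neq0 // IH intS mulrDl mul1r //.
Qed.

Lemma nu_X (w : forall k, F D k.+1) : is_params w -> forall k, (k <= r)%N ->
  forall (g : F D k) (n : int), g != 0 -> forall j,
  nth 0 (nu w (g ^ n)) j = n * nth 0 (nu w g) j.
Proof.
move=> hw k kr g n g0 j; case: n => n; first by rewrite -exprnP nu_Xn.
rewrite NegzE -invr_expz -exprnP.
have h0 : g ^+ n.+1 != 0 by rewrite expf_neq0.
have := @nu_mul w hw k kr _ _ h0 (invr_neq0 h0) j.
rewrite mulfV // nu_one // nu_Xn // => h; rewrite mulNr.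
move: h; set y := (_ * _); set x := nth _ _ _ => h; lia.
Qed.

Variables (u v : forall k, F D k.+1) (hu : is_params u) (hv : is_params v).

Lemma ordlam k : (k < r)%N -> ord (lambda u v k) = 0.
Proof.
move=> kr; have [u0 u1] := hu k kr; have [v0 v1] := hv k kr.
by rewrite /lambda omul ?invr_neq0 // ordV // u1 v1 subrr.
Qed.

Lemma lam0 k : (k < r)%N -> lambda u v k != 0.
Proof.
move=> kr; have [u0 u1] := hu k kr; have [v0 v1] := hv k kr.
by rewrite /lambda mulf_neq0 ?invr_neq0.
Qed.

Lemma key k (g : F D k.+1) : (k < r)%N ->
  g * v k ^ (- ord g) = (g * u k ^ (- ord g)) * (lambda u v k) ^ (ord g).
Proof.
move=> kr; have [u0 u1] := hu k kr; have [v0 v1] := hv k kr.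
rewrite /lambda expfzMl exprz_inv mulrA -[g * _ * _]mulrA -expfzDr // addNr expr0z mulr1 //.
Qed.

Lemma nu_top {w : forall k, F D k.+1} {k} {x : F D k.+1} {j} : is_params w -> (k < r)%N ->
  ord x = 0 -> nth 0 (nu w x) j.+1 = nth 0 (nu w (res x)) j.
Proof. by move=> hw kr ox /=; rewrite ox oppr0 expr0z mulr1. Qed.

Lemma main k : (k <= r)%N -> forall g : F D k, g != 0 -> forall j,
  nth 0 (nu v g) j = nth 0 (nu u g) j +
    \sum_(0 <= i < k) (if (i <= j)%N then
       nth 0 (nu u g) i * nth 0 (nu v (lambda u v (k.-1 - i))) (j - i) else 0).
Proof.
elim: k => [|k IH] kr g g0 j; first by rewrite big_geq // !nth_nil addr0.
have {}kr : (k < r)%N by [].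
have [u0 u1] := hu k kr; have [v0 v1] := hv k kr.
rewrite big_nat_recl //.
case: j => [|j].
  rewrite big1 => [|i _] //.
  rewrite /= subn0 ordlam // mulr0 !addr0 //.
have ga : g * u k ^ (- ord g) != 0 by rewrite mulf_neq0 ?expfz_neq0.
have E := @nu_mul v hv k.+1 kr _ _ ga (expfz_neq0 (ord g) (lam0 k kr)) j.+1.
rewrite -key // (@nu_X v hv k.+1 kr _ _ (lam0 k kr)) in E.
rewrite (nu_top hv kr (ordnorm hv kr g0)) (nu_top hv kr (ordnorm hu kr g0)) in E.
rewrite (nu_top hv kr (ordlam k kr)) in E.
have -> : nth 0 (nu v g) j.+1 = nth 0 (nu v (res (g * v k ^ (- ord g)))) j by [].
rewrite E IH ?(ltnW kr) ?(rneq0 kr ga (ordnorm hu kr g0)) //.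
rewrite subn0 /= ordlam // oppr0 expr0z mulr1.
rewrite -addrA; congr (_ + _); rewrite addrC; congr (_ + _).
apply: eq_big_nat => i /andP[_ ik].
have -> : (k - i.+1 = k.-1 - i)%N by lia.
by rewrite subSS ltnS.
Qed.
End S.

Theorem proposition3p2 (r : nat) (D : DVRFlag r)
  (u v : forall k, F D k.+1) :
  is_params u -> is_params v ->
  forall f : F D r, f != 0 -> nuY u f *m Rmat u v = nuY v f.
Proof.
move=> hu hv f f0; apply/rowP => j.
rewrite /Rmat mulmxDr mulmx1 /nuY /embed_row !mxE subnn /= !subn0.
rewrite (@main r D u v hu hv r (leqnn r) f f0 j) big_mkord.
congr (_ + _); apply: eq_bigr => i _.
rewrite !mxE subn0.
have -> : (r - i = (r.-1 - i).+1)%N by have := ltn_ord i; lia.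
rewrite /= /embed_row mxE.
have -> : (r - (r.-1 - i).+1 = i)%N by have := ltn_ord i; lia.
by rewrite ltnNge; case: (i <= j)%N => //=; rewrite mulr0.
Qed.
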